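(* Let $\mathbb{H}$ be a connected $k$-regular $r$-uniform simple hypergraph on $n\ge 2$ vertices, and let $\mu_1$ be the second largest eigenvalue of its adjacency matrix. Then $$k-\mu_1 < 2k(r-1)\,\lambda(\mathbb{H})\sqrt{\frac{n}{\lfloor n/2\rfloor}}.$$
   Context: A hypergraph $\mathbb{H}=(V,E)$ is $r$-uniform if every edge has exactly $r$ vertices, and $k$-regular if every vertex lies in exactly $k$ edges. The adjacency matrix of $\mathbb{H}$ with vertices $v_1,\dots,v_n$ is the $n\times n$ matrix whose $(i,j)$ entry is $1$ if $i\neq j$ and $v_i,v_j$ lie in a common edge, and $0$ otherwise; its eigenvalues are $\mu_0\ge\mu_1\ge\cdots\ge\mu_{n-1}$. For non-negative integers $h>k$, an $L(h,k)$-colouring of $\mathbb{H}$ is a map $f:V\to\mathbb{Z}_{\ge 0}$ such that $|f(u)-f(v)|\ge h$ whenever $u\ne v$ lie in a common edge, and $|f(u)-f(v)|\ge k$ whenever there are edges $e_1\ni v$, $e_2\ni u$ with $(e_1\cap e_2)\setminus\{u,v\}\ne\emptyset$. The span is $\max f-\min f$; $\lambda_{h,k}(\mathbb{H})$ is the minimum span and $\lambda(\mathbb{H})=\lambda_{2,1}(\mathbb{H})$. *)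

(* Defs.v *)
From HB Require Import structures.
From mathcomp Require Import all_boot all_order all_algebra.
From mathcomp Require Import reals.
Set Implicit Arguments. Unset Strict Implicit. Unset Printing Implicit Defensive.
Import Order.TTheory GRing.Theory Num.Theory.

(* A hypergraph on the vertex set 'I_n is given by its edge set
   E : {set {set 'I_n}} (a set of edges, so no repeated edges). *)

Section Hypergraph.
Variable n : nat.
Variable E : {set {set 'I_n}}.

Definition uniform (r : nat) : Prop := forall e, e \in E -> #|e| = r.

Definition regular (k : nat) : Prop :=
  forall v : 'I_n, #|[set e in E | v \in e]| = k.

Definition hadj : rel 'I_n :=
  fun u v => (u != v) && [exists e in E, (u \in e) && (v \in e)].

Definition hconnected : Prop := forall u v : 'I_n, connect hadj u v.

Definition adjmx (R : nzRingType) : 'M[R]_n :=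
  \matrix_(i, j) ((hadj i j)%:R)%R.

Definition Lhk_colouring (h k : nat) (f : 'I_n -> nat) : Prop :=
  (forall u v : 'I_n, u != v ->
     (exists2 e, e \in E & (u \in e) && (v \in e)) ->
     (h <= `|(Posz (f u) - Posz (f v))%R|)%N) /\
  (forall u v : 'I_n, u != v ->
     (exists e1, exists e2, [/\ e1 \in E, e2 \in E, v \in e1, u \in e2 &
        (e1 :&: e2) :\: [set u; v] != set0]) ->
     (k <= `|(Posz (f u) - Posz (f v))%R|)%N).

(* span = max f - min f, written as the maximal difference f i - f j *)
Definition span (f : 'I_n -> nat) : nat :=
  \max_(i : 'I_n) \max_(j : 'I_n) (f i - f j)%N.

Definition is_lambda_hk (h k lam : nat) : Prop :=
  (exists f, Lhk_colouring h k f /\ span f = lam) /\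
  (forall f, Lhk_colouring h k f -> (lam <= span f)%N).

Definition is_lambda (lam : nat) : Prop := is_lambda_hk 2 1 lam.

End Hypergraph.

(* mu is the list of eigenvalues (with multiplicity) of the square matrix A,
   sorted in nonincreasing order: mu_0 >= mu_1 >= ... *)
Definition sorted_spectrum (R : realType) (n : nat) (A : 'M[R]_n) (mu : seq R)
  : Prop :=
  [/\ size mu = n, sorted (fun x y => y <= x)%R mu &
      char_poly A = \prod_(x <- mu) ('X - x%:P)]%R.

(* Main.v *)
Require Import Defs.
From HB Require Import structures.
From mathcomp Require Import all_boot all_order all_algebra.
From mathcomp Require Import reals.
From mathcomp Require Import ring lra.
Import Order.TTheory GRing.Theory Num.Theory.
Local Open Scope ring_scope.

Lemma card_bigcup_le (T I : finType) (P : pred I) (F : I -> {set T}) :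
  (#|\bigcup_(i | P i) F i| <= \sum_(i | P i) #|F i|)%N.
Proof.
elim/big_rec2: _ => [|i U m _ IH]; first by rewrite cards0.
by apply: leq_trans (leq_card_setU _ _) _; rewrite leq_add2l.
Qed.

Lemma deg_bound n (E : {set {set 'I_n}}) r k (j : 'I_n) :
  uniform E r -> regular E k ->
  (#|[set i | hadj E i j]| <= k * (r - 1))%N.
Proof.
move=> hu hr.
have sub : [set i | hadj E i j] \subset
   \bigcup_(e in [set e in E | j \in e]) (e :\ j).
  apply/subsetP => i; rewrite inE => /andP[nij /existsP[e /and3P[eE ie je]]].
  apply/bigcupP; exists e; first by rewrite inE eE.
  by rewrite !inE ie andbT.
apply: (leq_trans (subset_leq_card sub)).
have := @card_bigcup_le _ _ (fun e => e \in [set e in E | j \in e]) (fun e => e :\ j); move=> /leq_trans; apply.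
rewrite (eq_bigr (fun _ => r - 1)%N).
  by rewrite sum_nat_const hr mulnC.
move=> e; rewrite inE => /andP[eE je].
have := cardsD1 j e; rewrite je (hu e eE) => ->. by rewrite add1n subn1.
Qed.

Lemma eig_lower (R : realType) n (E : {set {set 'I_n}}) r k (a : R) :
  uniform E r -> regular E k ->
  root (char_poly (adjmx E R)) a -> - (k * (r - 1))%N%:R <= a.
Proof.
move=> hu hr; rewrite -eigenvalue_root_char => /eigenvalueP[v hv vn0].
have [i0 _] : exists i0 : 'I_n, v 0 i0 != 0.
  apply/existsP; apply: contraNT vn0 => /existsPn H.
  by apply/eqP/rowP => i; rewrite mxE; apply/eqP/negPn/H.
pose j := Order.arg_max i0 xpredT (fun j => `|v 0 j|).
have jmax : forall i, `|v 0 i| <= `|v 0 j|.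
  by move=> i; rewrite /j; case: Order.TotalTheory.arg_maxP => // m _ H; apply: H.
have vj : 0 < `|v 0 j|.
  case: (ltrP 0 `|v 0 j|) => // h; case/eqP: vn0; apply/rowP => i.
  rewrite mxE; apply/normr0_eq0/eqP; rewrite eq_le normr_ge0 andbT.
  by apply: le_trans (jmax i) h.
have e1 : a * v 0 j = \sum_i v 0 i * (hadj E i j)%:R.
  have := congr1 (fun M : 'M[R]_(1,n) => M 0 j) hv; rewrite !mxE => <-.
  by apply: eq_bigr => i _; rewrite mxE.
have H : `|a| * `|v 0 j| <= (k * (r - 1))%N%:R * `|v 0 j|.
  rewrite -normrM e1; apply: le_trans (ler_norm_sum _ _ _) _.
  apply: (@le_trans _ _ (\sum_i (hadj E i j)%:R * `|v 0 j|)).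
    apply: ler_sum => i _; rewrite normrM mulrC ger0_norm ?ler0n //.
    by apply: ler_wpM2l => //; rewrite ler0n.
  rewrite -mulr_suml ler_wpM2r ?normr_ge0 //.
  have -> : \sum_i ((hadj E i j)%:R : R) = #|[set i | hadj E i j]|%:R.
    rewrite -sum1_card natr_sum [RHS]big_mkcond /=.
    by apply: eq_bigr => i _; rewrite inE; case: (hadj E i j).
  by rewrite ler_nat deg_bound.
rewrite ler_pM2r // in H.
rewrite lerNl; apply: le_trans H; rewrite -normrN; exact: ler_norm.
Qed.

Theorem corollary2p5 (R : realType) (n r k : nat) (E : {set {set 'I_n}})
  (mu : seq R) (lam : nat) :
  (2 <= n)%N ->
  uniform E r -> regular E k -> hconnected E ->
  sorted_spectrum (adjmx E R) mu ->
  is_lambda E lam ->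
  k%:R - mu`_1 <
    2 * k%:R * (r%:R - 1) * lam%:R * Num.sqrt (n%:R / (n./2)%:R).
Proof.
move=> n2 hu hr hc [smu _ hchar] [[f [[hf1 _] spf]] _].
have n0 : (0 < n)%N by apply: leq_trans n2.
have n1 : (1 < n)%N by [].
have [x [y hxy]] : exists x y, hadj E x y.
  have := hc (Ordinal n0) (Ordinal n1) => /connectP [[|z p]] /=.
    by move=> _ /(congr1 val).
  by move=> /andP[h _] _; exists (Ordinal n0), z.
case/andP: (hxy) => nxy /existsP[e /and3P[eE xe ye]].
have r2 : (2 <= r)%N.
  rewrite -(hu e eE); apply: (leq_trans _ (subset_leq_card (A := [set x; y]) _)).
    by rewrite cards2 nxy.
  by apply/subsetP => z; rewrite !inE => /orP[]/eqP->.
have k1 : (1 <= k)%N.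
  by rewrite -(hr x) card_gt0; apply/set0Pn; exists e; rewrite inE eE xe.
have lam2 : (2 <= lam)%N.
  have := hf1 x y nxy (ex_intro2 _ _ e eE (introT andP (conj xe ye))).
  have sp : forall a b, (f a - f b <= lam)%N.
    move=> a b; rewrite -spf; rewrite /Defs.span.
    apply: (leq_trans (@leq_bigmax _ (fun b => f a - f b)%N b)).
    exact: (@leq_bigmax _ (fun a => \max_j (f a - f j))%N a).
  case: (leqP (f x) (f y)) => h.
    rewrite (distnEr h) => h2; exact: (leq_trans h2 (sp _ _)).
  rewrite (distnEl (ltnW h)) => h2; exact: (leq_trans h2 (sp _ _)).
have root1 : root (char_poly (adjmx E R)) mu`_1.
  by rewrite hchar root_prod_XsubC mem_nth // smu.
have := @eig_lower R n E r k _ hu hr root1.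
have s1 : 1 <= Num.sqrt (n%:R / (n./2)%:R :> R).
  have h0 : (0 < n./2)%N by rewrite -divn2 divn_gt0.
  rewrite -[X in X <= _]sqrtr1 ler_sqrt ?divr_ge0 //.
  rewrite ler_pdivlMr ?ltr0n // mul1r ler_nat -divn2; exact: leq_div.
rewrite natrM natrB ?(leq_trans _ r2) //.
set s := Num.sqrt _.
have K1 : 1 <= (k%:R : R) by rewrite ler1n.
have Q1 : 1 <= (r%:R : R) - 1%:R.
  have : (2%:R : R) <= r%:R by rewrite ler_nat.
  rewrite -natrB ?(leq_trans _ r2) // ler1n subn_gt0 //.

have L2 : 2 <= (lam%:R : R) by rewrite ler_nat.
move=> hm.
have KP : (k%:R : R) <= k%:R * (r%:R - 1%:R).
  by rewrite -{1}(mulr1 (k%:R : R)) ler_wpM2l // (le_trans _ K1).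
have hP : 1 <= (k%:R * (r%:R - 1) : R) by apply: le_trans KP.
have h4 : 4 * (k%:R * (r%:R - 1)) <= 2 * k%:R * (r%:R - 1) * lam%:R * s :> R.
  have -> : 2 * k%:R * (r%:R - 1) * lam%:R * s =
       (k%:R * (r%:R - 1)) * (2 * lam%:R * s) :> R by ring.
  rewrite [4 * _]mulrC ler_wpM2l //; first exact: (le_trans ler01 hP).
  have h1 : 4 <= 2 * lam%:R :> R by lra.
  apply: (le_trans h1); rewrite -{1}(mulr1 (2 * lam%:R)) ler_wpM2l //; lra.
lra.
Qed.
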